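(* Let $p$ be a prime, $m,t\ge 1$, $B=\mathrm{GF}(p^m)$ and $F=\mathrm{GF}(p^{mt})$, and assume that $t$ is divisible by $p$ (the characteristic of $F$). Let $n=|F|=|B|^t$, $k=n(1-1/|B|)$, and let $\mathcal{C}=\mathrm{RS}(F,k)=\{(f(\alpha))_{\alpha\in F} : f\in F[x],\ \deg f<k\}$, where the symbol $f(\alpha)$ is stored at the node indexed by $\alpha$. Then for any two distinct $\alpha^*,\overline{\alpha}\in F$ whose symbols are erased, there is a distributed repair scheme (Distributed Repair Scheme II) with total repair bandwidth $2(n-1)$ sub-symbols (elements of $B$): each of the two replacement nodes (for $f(\alpha^* )$ and for $f(\overline{\alpha})$) downloads one sub-symbol from each of the $n-2$ surviving nodes (computed from that node's stored symbol) and one sub-symbol from the other replacement node (computed from the data that replacement node has downloaded from the surviving nodes), and from these $n-1$ sub-symbols recovers its erased symbol.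
   Context: Elements of $F$ are called symbols and elements of $B$ sub-symbols. The trace is $\mathrm{Tr}_{F/B}(x)=\sum_{i=0}^{t-1}x^{|B|^i}$. In distributed repair, each erased symbol is reconstructed at its own replacement node; the replacement nodes download data from the surviving nodes and may also exchange data among themselves. The repair bandwidth is the total number of sub-symbols downloaded by all replacement nodes. *)

(* Defs.v *)
From mathcomp Require Import all_boot all_order all_algebra.
Set Implicit Arguments. Unset Strict Implicit. Unset Printing Implicit Defensive.
Import GRing.Theory.
Local Open Scope ring_scope.

(* The subfield B = GF(p^m) of a finite field F with |F| = p^(m t):
   the set of x in F with x^(p^m) = x. Sub-symbols are the elements of F
   lying in B. *)
Definition subfieldB (F : finFieldType) (p m : nat) : pred F :=
  fun x => x ^+ (p ^ m) == x.

(* The Reed-Solomon code RS(F,k): codewords (f(alpha))_{alpha in F},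
   deg f < k, i.e. size f <= k. *)
Definition RS_poly (F : finFieldType) (k : nat) (f : {poly F}) : bool :=
  (size f <= k)%N.

(* Downloaded data of a replacement node: a vector indexed by the nodes;
   only the surviving nodes (alpha <> a1, a2) contribute, the erased
   positions are filled with 0 (they carry no information). *)
Definition downloads (F : finFieldType) (a1 a2 : F) (g : F -> F -> F)
  (f : {poly F}) : F -> F :=
  fun alpha => if (alpha == a1) || (alpha == a2) then 0 else g alpha f.[alpha].

(* A distributed repair scheme of the shape of "Distributed Repair Scheme II"
   for the two erased nodes a1 <> a2 of RS(F,k) over the sub-symbol field B:
   - replacement node j downloads from each surviving node alpha the
     sub-symbol g_j alpha (f(alpha)) in B (one sub-symbol per surviving node);
   - replacement node j sends to the other replacement node one sub-symbol
     h_j (its downloads) in B;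
   - replacement node j recovers its erased symbol by r_j from its own
     downloads and the sub-symbol received from the other replacement node.
   Total bandwidth: 2 ((n - 2) + 1) = 2 (n - 1) sub-symbols. *)
Definition dist_repair_scheme_II (F : finFieldType) (B : pred F) (k : nat)
  (a1 a2 : F) : Prop :=
  exists (g1 g2 : F -> F -> F) (h1 h2 : (F -> F) -> F)
         (r1 r2 : (F -> F) -> F -> F),
    [/\ (forall alpha c, B (g1 alpha c) /\ B (g2 alpha c)),
        (forall d, B (h1 d) /\ B (h2 d)) &
        (forall f : {poly F}, RS_poly k f ->
           r1 (downloads a1 a2 g1 f) (h2 (downloads a1 a2 g2 f)) = f.[a1] /\
           r2 (downloads a1 a2 g2 f) (h1 (downloads a1 a2 g1 f)) = f.[a2])].

(* Main.v *)
Require Import Defs.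
From mathcomp Require Import all_boot all_order all_algebra all_field.
From mathcomp Require Import zify.
Set Implicit Arguments. Unset Strict Implicit. Unset Printing Implicit Defensive.
Import GRing.Theory.
Local Open Scope ring_scope.

Section Repair.
Variables (p m t : nat) (F : finFieldType).
Hypotheses (hp : prime p) (hm : (0 < m)%N) (ht : (0 < t)%N)
  (hF : #|F| = (p ^ (m * t))%N) (hpt : (p %| t)%N).

Let q := (p ^ m)%N.

Lemma pch : p \in [pchar F].
Proof. exact: card_finPcharP hF hp. Qed.

Lemma frobE e (x y : F) : (x + y) ^+ (p ^ e) = x ^+ (p ^ e) + y ^+ (p ^ e).
Proof.
apply: exprDn_pchar; rewrite (eq_pnat _ (pcharf_eq pch)) pnatX pnat_id //.
Qed.

Lemma q_gt0 i : (0 < q ^ i)%N.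
Proof. by rewrite expn_gt0 /q expn_gt0 prime_gt0. Qed.

Lemma q_gt1 : (1 < q)%N.
Proof. rewrite /q -{1}(expn0 p) ltn_exp2l ?prime_gt1 //. Qed.

Lemma qD i (x y : F) : (x + y) ^+ (q ^ i) = x ^+ (q ^ i) + y ^+ (q ^ i).
Proof. by rewrite /q -expnM frobE. Qed.

Lemma q0 i : (0 : F) ^+ (q ^ i) = 0.
Proof. by rewrite expr0n; case: eqP => // h; have := q_gt0 i; rewrite h. Qed.

Lemma qN i (x : F) : (- x) ^+ (q ^ i) = - (x ^+ (q ^ i)).
Proof.
apply/eqP; rewrite -addr_eq0 -qD addNr q0 //.
Qed.

Definition Tr (y : F) := \sum_(i < t) y ^+ (q ^ i).

Lemma TrD x y : Tr (x + y) = Tr x + Tr y.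
Proof. by rewrite /Tr -big_split; apply: eq_bigr => i _; rewrite qD. Qed.

Lemma Tr0 : Tr 0 = 0.
Proof. by rewrite /Tr big1 // => i _; rewrite q0. Qed.

Lemma TrN x : Tr (- x) = - Tr x.
Proof. by rewrite /Tr -sumrN; apply: eq_bigr => i _; rewrite qN. Qed.

Lemma TrB' x y : Tr (x - y) = Tr x - Tr y.
Proof. by rewrite TrD TrN. Qed.

Lemma Tr_sum (I : finType) (P : pred I) (G : I -> F) :
  Tr (\sum_(a | P a) G a) = \sum_(a | P a) Tr (G a).
Proof. exact: (big_morph Tr TrD Tr0). Qed.

Lemma q1D (x y : F) : (x + y) ^+ q = x ^+ q + y ^+ q.
Proof. by have := qD 1 x y; rewrite expn1. Qed.

Lemma cardq : #|F| = (q ^ t)%N.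
Proof. by rewrite hF /q expnM. Qed.

Lemma TrB x : Tr x ^+ q = Tr x.
Proof.
have e0 : (0 : F) ^+ q = 0 by have := q0 1; rewrite expn1.
rewrite /Tr (big_morph (fun z : F => z ^+ q) q1D e0).
under eq_bigr => i _ do rewrite -exprM -expnSr.
move: cardq; case: t ht => // t' _ ct.
rewrite big_ord_recr big_ord_recl /= -ct expf_card expn0 expr1 addrC.
by congr (_ + _); apply: eq_bigr => i _.
Qed.

Lemma TrinB x : @subfieldB F p m (Tr x).
Proof. by rewrite /subfieldB; apply/eqP; exact: TrB. Qed.

Lemma Bpow (c : F) i : c ^+ q = c -> c ^+ (q ^ i) = c.
Proof.
move=> hc; elim: i => [|i IH]; first by rewrite expn0 expr1.
by rewrite expnSr exprM IH hc.
Qed.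

Lemma TrZ (c z : F) : c ^+ q = c -> Tr (c * z) = c * Tr z.
Proof.
move=> hc; rewrite /Tr mulr_sumr; apply: eq_bigr => i _.
by rewrite exprMn (Bpow _ hc).
Qed.

Lemma Tr1 : Tr 1 = 0.
Proof.
rewrite /Tr (eq_bigr (fun _ => 1)); last by move=> i _; rewrite expr1n.
by rewrite sumr_const card_ord -(divnK hpt) mulrnA -mulr_natr (pcharf0 pch) mulr0.
Qed.


Lemma Tr_nondeg : exists w, Tr w != 0.
Proof.
case: (boolP [exists w, Tr w != 0]) => [/existsP//|/existsPn hall].
exfalso.
pose T : {poly F} := \sum_(i < t) 'X^(q ^ i).
have hT w : T.[w] = Tr w by rewrite /T horner_sum; apply: eq_bigr => i _; rewrite hornerXn.
have hT1 : T`_1 = 1.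
  rewrite /T coef_sum; case: t ht => // t' _.
  rewrite big_ord_recl /= coefXn expn0 eqxx big1 ?addr0 // => i _.
  rewrite coefXn; case: eqP => // h.
  have := q_gt1; have : (1 < q ^ (bump 0 i))%N.
    by rewrite /bump /= add1n -{1}(expn0 q) ltn_exp2l // q_gt1.
  by rewrite -h.
have Tnz : T != 0.
  by apply/eqP => h; move: hT1; rewrite h coef0 => /eqP; rewrite eq_sym oner_eq0.
have sT : (size T <= (q ^ t.-1).+1)%N.
  rewrite /T; elim/big_ind: _ => //; first by rewrite size_poly0.
    by move=> a b ha hb; apply: leq_trans (size_polyD _ _) _; rewrite geq_max ha hb.
  move=> i _; rewrite size_polyXn ltnS leq_exp2l ?q_gt1 //.
  by case: t ht i => // t' _ i; rewrite /= -ltnS.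
have := max_poly_roots Tnz (rs := enum F).
rewrite enum_uniq -cardE cardq.
have -> : all (root T) (enum F).
  by apply/allP => w _; rewrite /root hT; have := hall w; rewrite negbK.
move=> /(_ isT isT) h.
have := leq_trans h sT; have := q_gt1.
case: t ht => // t' _; rewrite expnS /=.
have : (0 < q ^ t')%N by apply: q_gt0.
move: (q ^ t')%N => X; nia.
Qed.

Lemma Tr_inj z z' : (forall u, Tr (u * z) = Tr (u * z')) -> z = z'.
Proof.
move=> h; apply/eqP; rewrite -subr_eq0; apply/negPn/negP => nz.
case: Tr_nondeg => w; apply/negP; rewrite negbK.
have := h (w / (z - z')).
move/eqP; rewrite -subr_eq0 -TrB' -mulrBr mulfVK //.
Qed.

Lemma card_gt1 : (1 < #|F|)%N.
Proof. by rewrite cardq -{1}(expn0 q) ltn_exp2l ?q_gt1. Qed.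

Lemma psum d : (d < #|F|.-1)%N -> \sum_(x : F) x ^+ d = 0.
Proof.
move=> hd; case: d hd => [|d] hd.
  under eq_bigr do rewrite expr0.
  rewrite sumr_const hF natrX (pcharf0 pch) expr0n.
  by case: eqP => // /eqP; rewrite muln_eq0 => /orP[] /eqP h; move: hm ht; rewrite h.
have [c cnz cd] : exists2 c : F, c != 0 & c ^+ d.+1 != 1.
  case: (boolP [exists c : F, (c != 0) && (c ^+ d.+1 != 1)]).
    by case/existsP => c /andP[]; exists c.
  move/existsPn => hall; exfalso.
  have nz : ('X^(d.+1) - 1 : {poly F}) != 0.
    by rewrite -size_poly_eq0 size_Xn_sub_1.
  have := max_poly_roots nz (rs := enum (predC1 (0 : F))).
  rewrite enum_uniq -cardE cardC1 size_Xn_sub_1 //.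
  have -> : all (root ('X^(d.+1) - 1)) (enum (predC1 (0 : F))).
    apply/allP => w; rewrite mem_enum !inE => wnz.
    rewrite /root hornerD hornerN hornerXn hornerC subr_eq0.
    by have := hall w; rewrite negb_and wnz /= negbK.
  move=> /(_ isT isT); rewrite ltnS => h.
  by move: hd; rewrite ltnNge h.
set S := \sum_(x : F) x ^+ d.+1.
have : S = c ^+ d.+1 * S.
  rewrite {1}/S (reindex_inj (mulfI cnz)) /= mulr_sumr.
  by apply: eq_bigr => x _; rewrite exprMn.
move/eqP; rewrite -subr_eq0 -{1}(mul1r S) -mulrBl mulf_eq0 subr_eq0 eq_sym.
by rewrite (negbTE cd) /= => /eqP.
Qed.

Lemma sum_horner (P : {poly F}) : (size P <= #|F|.-1)%N -> \sum_(x : F) P.[x] = 0.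
Proof.
move=> hP.
under eq_bigr do rewrite horner_coef.
rewrite exchange_big /= big1 // => i _.
rewrite -mulr_sumr psum ?mulr0 //.
exact: leq_trans (ltn_ord i) hP.
Qed.


Let k := (#|F| - #|F| %/ q)%N.

Lemma hornerXsubCexp (x a : F) e : (('X - x%:P) ^+ e).[a] = (a - x) ^+ e.
Proof. by rewrite horner_exp hornerXsubC. Qed.

Lemma repairE (x u : F) (f : {poly F}) : (size f <= k)%N ->
  Tr (u * f.[x]) =
  - \sum_(a | a != x) Tr (u * (a - x)) * Tr (f.[a] / (a - x)).
Proof.
move=> sf.
pose G : {poly F} := \sum_(i < t) u ^+ (q ^ i) *: ('X - x%:P) ^+ (q ^ i).-1.
have sG : (size G <= q ^ t.-1)%N.
  rewrite /G; elim/big_ind: _ => //; first by rewrite size_poly0.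
    by move=> a b ha hb; apply: leq_trans (size_polyD _ _) _; rewrite geq_max ha hb.
  move=> i _; apply: leq_trans (size_scale_leq _ _) _.
  rewrite size_exp_XsubC prednK ?q_gt0 // leq_exp2l ?q_gt1 //.
  by case: t ht i => // t' _ i; rewrite /= -ltnS.
have sfG : (size (f * G)%R <= #|F|.-1)%N.
  have hk : (k + q ^ t.-1 = #|F|)%N.
    rewrite /k cardq; case: t ht => // t' _.
    rewrite expnSr mulnK ?(ltnW q_gt1) //=.
    have : (q ^ t' <= q ^ t' * q)%N by rewrite leq_pmulr ?(ltnW q_gt1).
    move: (q ^ t')%N (q ^ t' * q)%N => X Y; lia.
  apply: leq_trans (size_polyMleq f G) _.
  rewrite -hk; have := leq_add sf sG; lia.
have hG0 := sum_horner sfG.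
have Gx : G.[x] = u.
  rewrite /G horner_sum; case: t ht => // t' _.
  rewrite big_ord_recl /= big1 ?addr0.
    by rewrite hornerZ hornerXsubCexp expn0 expr1 /= expr0 mulr1.
  move=> i _; rewrite hornerZ hornerXsubCexp subrr expr0n.
  case: eqP => [h|]; last by rewrite mulr0.
  have : (1 < q ^ (bump 0 i))%N.
    by rewrite /bump /= add1n -{1}(expn0 q) ltn_exp2l // q_gt1.
  by rewrite -(prednK (q_gt0 (bump 0 i))) h.
have Ga a : a != x -> G.[a] = Tr (u * (a - x)) / (a - x).
  move=> ax; have ax0 : a - x != 0 by rewrite subr_eq0.
  rewrite /G /Tr horner_sum mulr_suml; apply: eq_bigr => i _.
  rewrite hornerZ hornerXsubCexp exprMn -mulrA; congr (_ * _).
  by rewrite -{2}(prednK (q_gt0 i)) exprSr mulfK.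
move: hG0; under eq_bigr do rewrite hornerM.
rewrite (bigD1 x) //= Gx => /eqP; rewrite addr_eq0 => /eqP h.
have -> : u * f.[x] = - \sum_(a | a != x) Tr (u * (a - x)) * (f.[a] / (a - x)).
  rewrite mulrC h; congr (- _); apply: eq_bigr => a ax.
  by rewrite Ga // mulrCA mulrA.
rewrite TrN Tr_sum; congr (- _); apply: eq_bigr => a _.
by rewrite TrZ // TrB.
Qed.


Lemma send (x y : F) (f : {poly F}) (D : F -> F) : x != y -> (size f <= k)%N ->
  D x = 0 -> D y = 0 ->
  (forall a, a != x -> a != y -> D a = Tr (f.[a] / (a - x))) ->
  Tr (\sum_a (y - x)^-1 * (a - x) * D a) = Tr (f.[x] / (x - y)).
Proof.
move=> xy sf Dx Dy Da.
have DB a : D a ^+ q = D a.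
  case: (eqVneq a x) => [->|ax]; first by rewrite Dx expr0n; case: (q) q_gt1.
  case: (eqVneq a y) => [->|ay]; first by rewrite Dy expr0n; case: (q) q_gt1.
  by rewrite Da // TrB.
rewrite Tr_sum.
under eq_bigr => a _ do rewrite mulrC TrZ ?DB //.
have -> : f.[x] / (x - y) = - ((y - x)^-1 * f.[x]).
  by rewrite -[y - x]opprB invrN mulNr opprK mulrC.
rewrite TrN repairE // opprK.
rewrite (bigD1 x) //= Dx mul0r add0r; apply: eq_bigr => a ax.
case: (eqVneq a y) => [->|ay]; first by rewrite Dy mulVf ?Tr1 ?mul0r ?mulr0 // subr_eq0 eq_sym.
by rewrite Da // mulrC.
Qed.

Lemma recv (x y : F) (f : {poly F}) (D : F -> F) e : x != y -> (size f <= k)%N ->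
  D x = 0 -> D y = 0 ->
  (forall a, a != x -> a != y -> D a = Tr (f.[a] / (a - y))) ->
  e = Tr (f.[x] / (x - y)) ->
  forall u, Tr (u * f.[y]) = - (\sum_a Tr (u * (a - y)) * D a) - Tr (u * (x - y)) * e.
Proof.
move=> xy sf Dx Dy Da -> u.
rewrite repairE // (bigD1 x) //= opprD addrC; congr (- _ - _).
apply/esym; rewrite (bigD1 y) //= Dy mulr0 add0r (bigD1 x) //= Dx mulr0 add0r.
by apply: eq_bigr => a /andP[ay ax]; rewrite Da.
Qed.

Definition rfun (x y : F) (d : F -> F) (e : F) : F :=
  odflt 0 [pick z | [forall u, Tr (u * z) ==
     - (\sum_a Tr (u * (a - y)) * d a) - Tr (u * (x - y)) * e]].

Lemma recv_r (x y : F) (f : {poly F}) (D : F -> F) e : x != y -> (size f <= k)%N ->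
  D x = 0 -> D y = 0 ->
  (forall a, a != x -> a != y -> D a = Tr (f.[a] / (a - y))) ->
  e = Tr (f.[x] / (x - y)) -> rfun x y D e = f.[y].
Proof.
move=> xy sf Dx Dy Da he; have R := recv xy sf Dx Dy Da he.
rewrite /rfun; case: pickP => [z /forallP hz | none] /=.
  by apply: Tr_inj => u; rewrite (eqP (hz u)) R.
exfalso; have := none f.[y]; move/negP; apply; apply/forallP => u.
by rewrite R.
Qed.

Lemma main (a1 a2 : F) : a1 != a2 -> dist_repair_scheme_II (@subfieldB F p m) k a1 a2.
Proof.
move=> a12.
exists (fun a c => Tr (c / (a - a1))), (fun a c => Tr (c / (a - a2))),
  (fun d => Tr (\sum_a (a2 - a1)^-1 * (a - a1) * d a)),
  (fun d => Tr (\sum_a (a1 - a2)^-1 * (a - a2) * d a)),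
  (rfun a2 a1), (rfun a1 a2).
split.
- by move=> a c; split; apply: TrinB.
- by move=> d; split; apply: TrinB.
move=> f sf; rewrite /RS_poly in sf.
have a21 : a2 != a1 by rewrite eq_sym.
have d1 g : downloads a1 a2 g f a1 = 0 by rewrite /downloads eqxx.
have d2 g : downloads a1 a2 g f a2 = 0 by rewrite /downloads eqxx orbT.
have d3 g a : a != a1 -> a != a2 -> downloads a1 a2 g f a = g a f.[a].
  by move=> h1 h2; rewrite /downloads (negbTE h1) (negbTE h2).
split.
- apply: (recv_r a21 sf (d2 _) (d1 _)).
    by move=> a h1 h2; rewrite d3.
  rewrite (send a21 sf (d2 _) (d1 _)) //.
  by move=> a h1 h2; rewrite d3.
- apply: (recv_r a12 sf (d1 _) (d2 _)).
    by move=> a h1 h2; rewrite d3.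
  rewrite (send a12 sf (d1 _) (d2 _)) //.
  by move=> a h1 h2; rewrite d3.
Qed.

End Repair.

Theorem theorem3 (p m t : nat) (F : finFieldType) :
  prime p -> (0 < m)%N -> (0 < t)%N -> #|F| = (p ^ (m * t))%N -> (p %| t)%N ->
  let n := #|F| in
  let k := (n - n %/ p ^ m)%N in
  forall a1 a2 : F, a1 != a2 ->
    dist_repair_scheme_II (@subfieldB F p m) k a1 a2.
Proof.
move=> hp hm ht hF hpt n k a1 a2 a12.
exact: (main hp hm ht hF hpt a12).
Qed.
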